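(* Let $C>0$ and $\epsilon\in(0,1)$, and let $\phi_C^\epsilon(z):=z+C(1+z)^\epsilon$, where $(\cdot)^\epsilon$ denotes the principal branch of the power function. Then: (1) The map $\phi_C^\epsilon$ is biholomorphic from $H(0)=\{z\in\mathbb{C}:\operatorname{Re}z>0\}$ onto its image. (2) $\operatorname{Re}\phi_C^\epsilon(ir)\sim C\cos\left(\epsilon\frac{\pi}{2}\right)r^\epsilon$ and $\operatorname{Im}\phi_C^\epsilon(ir)\sim r$ as $r\to+\infty$ in $\mathbb{R}$. (3) There exists a continuous function $f_C^\epsilon:[C,+\infty)\to[0,+\infty)$ such that $\operatorname{Im}\phi_C^\epsilon(ir)=f_C^\epsilon(\operatorname{Re}\phi_C^\epsilon(ir))$ for all $r>0$ and $f_C^\epsilon(r)\sim K_C^\epsilon r^{1/\epsilon}$ as $r\to+\infty$, where $K_C^\epsilon:=\left(C\cos\left(\epsilon\frac{\pi}{2}\right)\right)^{-1/\epsilon}$.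
   Context: For real functions (or germs) $f,g$, $f\sim g$ means that $g(x)\neq 0$ for all sufficiently large $x$ and $f(x)/g(x)\to 1$ as $x\to+\infty$. The formula for $\phi_C^\epsilon$ also makes sense on the closed right half-plane (in particular at the points $ir$, $r>0$), and in (2),(3) $\phi_C^\epsilon$ is evaluated there. *)

(* Defs.v *)
From Stdlib Require Import Reals.
From Coquelicot Require Import Coquelicot.
Open Scope R_scope.

(* Principal argument, with values in (-PI, PI]  (0 at the origin). *)
Definition Carg (w : C) : R :=
  let x := Re w in let y := Im w in
  if Rlt_dec 0 x then atan (y / x)
  else if Rlt_dec x 0 then
         (if Rle_dec 0 y then atan (y / x) + PI else atan (y / x) - PI)
  else if Rlt_dec 0 y then PI / 2
  else if Rlt_dec y 0 then - (PI / 2) else 0.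

Definition Cexp (z : C) : C := (exp (Re z) * cos (Im z), exp (Re z) * sin (Im z)).
Definition Clog (w : C) : C := (ln (Cmod w), Carg w).

Definition Cpow_pr (w : C) (a : R) : C := Cexp (RtoC a * Clog w).

Definition phi (Cc eps : R) (z : C) : C :=
  z + RtoC Cc * Cpow_pr (1 + z) eps.

Definition H0 : C -> Prop := fun z => 0 < Re z.

Definition holomorphic_on (f : C -> C) (U : C -> Prop) : Prop :=
  forall z, U z -> @ex_derive C_AbsRing C_NormedModule f z.

Definition open_C (U : C -> Prop) : Prop :=
  forall z, U z -> exists e : R, 0 < e /\ forall w, Cmod (w - z) < e -> U w.

Definition biholomorphic_onto_image (f : C -> C) (U : C -> Prop) : Prop :=
  open_C U /\ holomorphic_on f U /\
  (forall z1 z2, U z1 -> U z2 -> f z1 = f z2 -> z1 = z2) /\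
  open_C (fun w => exists z, U z /\ w = f z) /\
  exists g : C -> C,
    (forall z, U z -> g (f z) = z) /\
    holomorphic_on g (fun w => exists z, U z /\ w = f z).

Definition equiv_pinfty (f g : R -> R) : Prop :=
  (exists M : R, forall x, M < x -> g x <> 0) /\
  is_lim (fun x => f x / g x) p_infty 1.

(* Main.v *)
Require Import Defs.
From Stdlib Require Import Reals Lra Psatz ClassicalEpsilon.
From Coquelicot Require Import Coquelicot.
Open Scope R_scope.

Lemma deriv_C_iff (f : C -> C) (z l : C) :
  @is_derive C_AbsRing C_NormedModule f z l <->
  (forall eps, 0 < eps -> exists d, 0 < d /\ forall w, Cmod (w - z) < d ->
     Cmod (f w - f z - (w - z) * l) <= eps * Cmod (w - z)).
Proof.
split.
- intros [_ H] eps Heps.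
  assert (Hz : @is_filter_lim (AbsRing_NormedModule C_AbsRing) (@locally (AbsRing_UniformSpace C_AbsRing) z) z) by (intros P HP; exact HP).
  destruct (H z Hz (mkposreal eps Heps)) as [d Hd].
  exists d. split. apply cond_pos.
  intros w Hw. apply (Hd w). exact Hw.
- intros H. split. apply is_linear_scal_l.
  intros x Hx. apply (@is_filter_lim_locally_unique C_AbsRing (AbsRing_NormedModule C_AbsRing)) in Hx. subst x.
  intros eps. destruct (H eps (cond_pos eps)) as [d [Hd Hw]].
  exists (mkposreal d Hd). intros w Hb. apply Hw. exact Hb.
Qed.

Lemma Cmod_le_abs (u v : R) : Cmod (u, v) <= Rabs u + Rabs v.
Proof.
  unfold Cmod; simpl.
  rewrite <- (sqrt_Rsqr (Rabs u + Rabs v)) by (pose proof (Rabs_pos u); pose proof (Rabs_pos v); lra).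
  apply sqrt_le_1_alt. unfold Rsqr.
  assert (E1 : u ^ 2 = Rabs u * Rabs u) by (rewrite <- Rabs_mult; rewrite Rabs_right; nra).
  assert (E2 : v ^ 2 = Rabs v * Rabs v) by (rewrite <- Rabs_mult; rewrite Rabs_right; nra).
  simpl in E1, E2. rewrite E1, E2. pose proof (Rabs_pos u); pose proof (Rabs_pos v); nra.
Qed.

Lemma Cmod_ge_fst (z : C) : Rabs (fst z) <= Cmod z.
Proof. pose proof (Rmax_Cmod z). pose proof (Rmax_l (Rabs (fst z)) (Rabs (snd z))). lra. Qed.
Lemma Cmod_ge_snd (z : C) : Rabs (snd z) <= Cmod z.
Proof. pose proof (Rmax_Cmod z). pose proof (Rmax_r (Rabs (fst z)) (Rabs (snd z))). lra. Qed.

Lemma CR_deriv (f : C -> C) x y p q :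
  differentiable_pt_lim (fun a b => fst (f (a,b))) x y p (-q) ->
  differentiable_pt_lim (fun a b => snd (f (a,b))) x y q p ->
  @is_derive C_AbsRing C_NormedModule f (x,y) (p,q).
Proof.
  intros Hu Hv. apply deriv_C_iff. intros eps Heps.
  destruct (Hu (mkposreal (eps/2) ltac:(lra))) as [d1 H1].
  destruct (Hv (mkposreal (eps/2) ltac:(lra))) as [d2 H2].
  exists (Rmin d1 d2). split. apply Rmin_pos; apply cond_pos.
  intros [a b] Hw.
  assert (Ha : Rabs (a - x) < d1).
  { pose proof (Cmod_ge_fst ((a,b) - (x,y))%C). simpl in H.
    pose proof (Rmin_l d1 d2). replace (a - x) with (a + - x) by ring. lra. }
  assert (Hb : Rabs (b - y) < d1).
  { pose proof (Cmod_ge_snd ((a,b) - (x,y))%C). simpl in H.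
    pose proof (Rmin_l d1 d2). replace (b - y) with (b + - y) by ring. lra. }
  assert (Ha' : Rabs (a - x) < d2).
  { pose proof (Cmod_ge_fst ((a,b) - (x,y))%C). simpl in H.
    pose proof (Rmin_r d1 d2). replace (a - x) with (a + - x) by ring. lra. }
  assert (Hb' : Rabs (b - y) < d2).
  { pose proof (Cmod_ge_snd ((a,b) - (x,y))%C). simpl in H.
    pose proof (Rmin_r d1 d2). replace (b - y) with (b + - y) by ring. lra. }
  specialize (H1 a b Ha Hb). specialize (H2 a b Ha' Hb'). simpl in H1, H2.
  assert (Hm : Rmax (Rabs (a - x)) (Rabs (b - y)) <= Cmod ((a,b) - (x,y))%C).
  { pose proof (Rmax_Cmod ((a,b) - (x,y))%C). simpl in H.
    replace (a - x) with (a + - x) by ring. replace (b - y) with (b + - y) by ring. exact H. }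
  destruct (f (a,b)) as [fa fb] eqn:Ef. destruct (f (x,y)) as [fx fy] eqn:Ez.
  simpl in H1, H2.
  eapply Rle_trans. apply Cmod_le_abs. simpl.
  replace (fa + - fx + - ((a + - x) * p - (b + - y) * q)) with
    (fa - fx - (p * (a - x) + - q * (b - y))) by ring.
  replace (fb + - fy + - ((a + - x) * q + (b + - y) * p)) with
    (fb - fy - (q * (a - x) + p * (b - y))) by ring.
  nra.
Qed.

Lemma dpl_fst x y : differentiable_pt_lim (fun a b => a) x y 1 0.
Proof.
  intros eps. exists eps. intros u v _ _.
  replace (u - x - (1 * (u - x) + 0 * (v - y))) with 0 by ring.
  rewrite Rabs_R0. apply Rmult_le_pos. left; apply cond_pos.
  apply Rle_trans with (Rabs (u - x)). apply Rabs_pos. apply Rmax_l.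
Qed.

Lemma dpl_snd x y : differentiable_pt_lim (fun a b => b) x y 0 1.
Proof.
  intros eps. exists eps. intros u v _ _.
  replace (v - y - (0 * (u - x) + 1 * (v - y))) with 0 by ring.
  rewrite Rabs_R0. apply Rmult_le_pos. left; apply cond_pos.
  apply Rle_trans with (Rabs (u - x)). apply Rabs_pos. apply Rmax_l.
Qed.

Lemma dpl_eq f x y a b a' b' :
  differentiable_pt_lim f x y a b -> a = a' -> b = b' -> differentiable_pt_lim f x y a' b'.
Proof. intros H <- <-. exact H. Qed.

Lemma dpl_plus0 p q : differentiable_pt_lim (fun a b => a + b) p q 1 1.
Proof.
  intros eps. exists eps. intros u v _ _.
  replace (u + v - (p + q) - (1 * (u - p) + 1 * (v - q))) with 0 by ring.
  rewrite Rabs_R0. apply Rmult_le_pos. left; apply cond_pos.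
  apply Rle_trans with (Rabs (u - p)). apply Rabs_pos. apply Rmax_l.
Qed.

Lemma dpl_mult0 p q : differentiable_pt_lim (fun a b => a * b) p q q p.
Proof.
  intros eps. exists eps. intros u v Hu Hv.
  replace (u * v - p * q - (q * (u - p) + p * (v - q))) with ((u - p) * (v - q)) by ring.
  rewrite Rabs_mult.
  pose proof (Rmax_l (Rabs (u - p)) (Rabs (v - q))).
  pose proof (Rmax_r (Rabs (u - p)) (Rabs (v - q))).
  pose proof (Rabs_pos (u - p)). pose proof (Rabs_pos (v - q)).
  apply Rle_trans with (Rmax (Rabs (u - p)) (Rabs (v - q)) * Rabs (v - q)).
  apply Rmult_le_compat_r; lra.
  rewrite Rmult_comm. apply Rmult_le_compat_r. 
  apply Rle_trans with (Rabs (u - p)); lra. lra.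
Qed.

Lemma dpl_plus f g x y f1 f2 g1 g2 :
  differentiable_pt_lim f x y f1 f2 -> differentiable_pt_lim g x y g1 g2 ->
  differentiable_pt_lim (fun a b => f a b + g a b) x y (f1 + g1) (f2 + g2).
Proof.
  intros Hf Hg.
  eapply dpl_eq. apply (differentiable_pt_lim_comp (fun a b => a + b)). apply dpl_plus0.
  exact Hf. exact Hg. ring. ring.
Qed.

Lemma dpl_mult f g x y f1 f2 g1 g2 :
  differentiable_pt_lim f x y f1 f2 -> differentiable_pt_lim g x y g1 g2 ->
  differentiable_pt_lim (fun a b => f a b * g a b) x y
     (f1 * g x y + f x y * g1) (f2 * g x y + f x y * g2).
Proof.
  intros Hf Hg.
  eapply dpl_eq. apply (differentiable_pt_lim_comp (fun a b => a * b)). apply dpl_mult0.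
  exact Hf. exact Hg. ring. ring.
Qed.

Lemma dpl_1d (g : R -> R) f x y l f1 f2 :
  derivable_pt_lim g (f x y) l -> differentiable_pt_lim f x y f1 f2 ->
  differentiable_pt_lim (fun a b => g (f a b)) x y (l * f1) (l * f2).
Proof.
  intros Hg Hf.
  eapply dpl_eq. apply (differentiable_pt_lim_comp (fun a _ => g a) f f).
  apply differentiable_pt_lim_proj1_0. exact Hg. exact Hf. exact Hf. ring. ring.
Qed.

Lemma dpl_const c x y : differentiable_pt_lim (fun _ _ => c) x y 0 0.
Proof.
  intros eps. exists eps. intros u v _ _.
  replace (c - c - (0 * (u - x) + 0 * (v - y))) with 0 by ring.
  rewrite Rabs_R0. apply Rmult_le_pos. left; apply cond_pos.
  apply Rle_trans with (Rabs (u - x)). apply Rabs_pos. apply Rmax_l.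
Qed.

Lemma Cexp_deriv (z : C) : @is_derive C_AbsRing C_NormedModule Cexp z (Cexp z).
Proof.
  destruct z as [x y].
  unfold Cexp at 2; simpl.
  apply CR_deriv; simpl.
  - eapply dpl_eq. apply dpl_mult.
    apply (dpl_1d exp (fun a b => a)). apply derivable_pt_lim_exp. apply dpl_fst.
    apply (dpl_1d cos (fun a b => b)). apply derivable_pt_lim_cos. apply dpl_snd.
    simpl. ring. simpl. ring.
  - eapply dpl_eq. apply dpl_mult.
    apply (dpl_1d exp (fun a b => a)). apply derivable_pt_lim_exp. apply dpl_fst.
    apply (dpl_1d sin (fun a b => b)). apply derivable_pt_lim_sin. apply dpl_snd.
    simpl. ring. simpl. ring.
Qed.

Lemma dpl_ext f g x y a b : (forall u v, f u v = g u v) ->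
  differentiable_pt_lim f x y a b -> differentiable_pt_lim g x y a b.
Proof.
  intros E H. apply (differentiable_pt_lim_ext f). exists (mkposreal 1 Rlt_0_1). intros; apply E. exact H.
Qed.


Lemma dinv x : x <> 0 -> derivable_pt_lim (fun t => / t) x (- / (x * x)).
Proof.
  intros Hx. apply is_derive_Reals.
  replace (- / (x * x)) with (- 1 / x ^ 2).
  apply (is_derive_inv (fun t => t)). apply is_derive_Reals. apply (derivable_pt_lim_id x). exact Hx.
  field. exact Hx.
Qed.

Lemma Carg_pos a b : 0 < a -> Carg (a, b) = atan (b * / a).
Proof.
  intros Ha. unfold Carg; simpl. destruct (Rlt_dec 0 a); [reflexivity | lra].
Qed.

Lemma Clog_deriv (x y : R) : 0 < x ->
  @is_derive C_AbsRing C_NormedModule Clog (x, y) (Cinv (x, y)).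
Proof.
  intros Hx.
  assert (Hs : 0 < x * x + y * y) by nra.
  assert (Hq : sqrt (x * x + y * y) * sqrt (x * x + y * y) = x * x + y * y) by (apply sqrt_sqrt; lra).
  assert (Hq0 : 0 < sqrt (x * x + y * y)) by (apply sqrt_lt_R0; lra).
  unfold Cinv; simpl.
  apply CR_deriv; simpl.
  - apply dpl_ext with (f := fun a b => ln (sqrt (a * a + b * b))).
    { intros u v. unfold Cmod; simpl. f_equal. f_equal. ring. }
    eapply dpl_eq.
    apply (dpl_1d ln (fun a b => sqrt (a * a + b * b))). apply derivable_pt_lim_ln. exact Hq0.
    apply (dpl_1d sqrt (fun a b => a * a + b * b)). apply derivable_pt_lim_sqrt. exact Hs.
    apply dpl_plus; apply dpl_mult; first [apply dpl_fst | apply dpl_snd].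
    simpl. replace (x * (x * 1) + y * (y * 1)) with (sqrt (x * x + y * y) * sqrt (x * x + y * y)) by (rewrite Hq; ring). field. lra.
    simpl. replace (x * (x * 1) + y * (y * 1)) with (sqrt (x * x + y * y) * sqrt (x * x + y * y)) by (rewrite Hq; ring). field. lra.
  - apply (differentiable_pt_lim_ext (fun a b => atan (b * / a))).
    { exists (mkposreal x Hx). intros u v Hu _. simpl in Hu. rewrite Carg_pos. reflexivity.
      apply Rabs_def2 in Hu. lra. }
    eapply dpl_eq.
    apply (dpl_1d atan (fun a b => b * / a)). apply is_derive_Reals. apply is_derive_atan.
    apply dpl_mult. apply dpl_snd. apply (dpl_1d (fun t => / t) (fun a b => a)).
    apply dinv. lra. apply dpl_fst.
    simpl. unfold Rsqr. field. split; lra.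
    simpl. unfold Rsqr. field. split; lra.
Qed.

Definition dphi (Cc eps : R) (z : C) : C :=
  (1 + RtoC Cc * (RtoC eps * (Cexp (RtoC eps * Clog (1 + z)) * Cinv (1 + z))))%C.

Lemma isdC_val (f : C -> C) z (l l' : C) :
  @is_derive C_AbsRing C_NormedModule f z l -> l = l' -> @is_derive C_AbsRing C_NormedModule f z l'.
Proof. intros H <-. exact H. Qed.

Lemma isdC_ext (f g : C -> C) z (l : C) :
  (forall t, f t = g t) -> 
  @is_derive C_AbsRing C_NormedModule f z l -> @is_derive C_AbsRing C_NormedModule g z l.
Proof. intros E H. eapply is_derive_ext. 2: exact H. exact E. Qed.

Lemma isdC_plus (f g : C -> C) z (lf lg : C) :
  @is_derive C_AbsRing C_NormedModule f z lf -> @is_derive C_AbsRing C_NormedModule g z lg ->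
  @is_derive C_AbsRing C_NormedModule (fun t => f t + g t)%C z (lf + lg)%C.
Proof. intros Hf Hg. exact (@is_derive_plus C_AbsRing C_NormedModule f g z lf lg Hf Hg). Qed.

Lemma Cmod_0' : Cmod (RtoC 0) = 0.
Proof. apply Cmod_0. Qed.

Lemma isdC_const (c z : C) : @is_derive C_AbsRing C_NormedModule (fun _ => c) z (RtoC 0).
Proof.
  apply deriv_C_iff. intros eps He. exists 1. split. lra. intros w _.
  replace (c - c - (w - z) * RtoC 0)%C with (RtoC 0).
  rewrite Cmod_0. apply Rmult_le_pos. lra. apply Cmod_ge_0.
  apply injective_projections; simpl; ring.
Qed.

Lemma isdC_id (z : C) : @is_derive C_AbsRing C_NormedModule (fun t => t) z (RtoC 1).
Proof.
  apply deriv_C_iff. intros eps He. exists 1. split. lra. intros w _.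
  replace (w - z - (w - z) * RtoC 1)%C with (RtoC 0).
  rewrite Cmod_0. apply Rmult_le_pos. lra. apply Cmod_ge_0.
  apply injective_projections; simpl; ring.
Qed.

Lemma isdC_conv (g : C -> C) z l :
  @is_derive C_AbsRing C_NormedModule g z l -> @is_derive C_AbsRing (AbsRing_NormedModule C_AbsRing) g z l.
Proof.
  intros [Hl H]. split. apply is_linear_scal_l. intros x Hx eps. exact (H x Hx eps).
Qed.

Lemma isdC_comp (f g : C -> C) z (lf lg : C) :
  @is_derive C_AbsRing C_NormedModule f (g z) lf -> @is_derive C_AbsRing C_NormedModule g z lg ->
  @is_derive C_AbsRing C_NormedModule (fun t => f (g t)) z (lg * lf)%C.
Proof. intros Hf Hg. exact (@is_derive_comp C_AbsRing C_NormedModule f g z lf lg Hf (isdC_conv _ _ _ Hg)). Qed.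

Lemma isdC_scal (c : C) (f : C -> C) z (lf : C) :
  @is_derive C_AbsRing C_NormedModule f z lf ->
  @is_derive C_AbsRing C_NormedModule (fun t => c * f t)%C z (c * lf)%C.
Proof.
  intros Hf. rewrite deriv_C_iff in Hf |- *. intros eps He.
  assert (Hc : 0 < Cmod c + 1) by (pose proof (Cmod_ge_0 c); lra).
  destruct (Hf (eps / (Cmod c + 1))) as [d [Hd Hw]]. apply Rdiv_lt_0_compat; lra.
  exists d. split. exact Hd. intros w Hwd.
  replace (c * f w - c * f z - (w - z) * (c * lf))%C with (c * (f w - f z - (w - z) * lf))%C.
  rewrite Cmod_mult. specialize (Hw w Hwd).
  apply Rle_trans with (Cmod c * (eps / (Cmod c + 1) * Cmod (w - z))).
  apply Rmult_le_compat_l. apply Cmod_ge_0. exact Hw.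
  pose proof (Cmod_ge_0 c). pose proof (Cmod_ge_0 (w - z)%C).
  rewrite <- Rmult_assoc. apply Rmult_le_compat_r. lra.
  apply Rle_trans with ((Cmod c + 1) * (eps / (Cmod c + 1))).
  apply Rmult_le_compat_r. apply Rlt_le, Rdiv_lt_0_compat; lra. lra.
  right. field. lra.
  apply injective_projections; simpl; ring.
Qed.

Lemma phi_deriv Cc eps z : 0 < fst z ->
  @is_derive C_AbsRing C_NormedModule (phi Cc eps) z (dphi Cc eps z).
Proof.
  intros Hz. destruct z as [x y]. simpl in Hz.
  assert (A1 : @is_derive C_AbsRing C_NormedModule (fun t => RtoC 1 + t)%C (x, y) (RtoC 0 + RtoC 1)%C).
  { apply isdC_plus. apply isdC_const. apply isdC_id. }
  assert (A2 : @is_derive C_AbsRing C_NormedModule Clog ((fun t => RtoC 1 + t)%C (x, y)) (Cinv (1 + x, 0 + y))).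
  { apply (Clog_deriv (1 + x) (0 + y)). lra. }
  pose proof (isdC_comp _ _ _ _ _ A2 A1) as A3.
  pose proof (isdC_scal (RtoC eps) _ _ _ A3) as A4. simpl in A4.
  pose proof (isdC_comp Cexp _ _ _ _ (Cexp_deriv _) A4) as A5.
  pose proof (isdC_scal (RtoC Cc) _ _ _ A5) as A6.
  pose proof (isdC_plus _ _ _ _ _ (isdC_id (x, y)) A6) as A7.
  eapply isdC_val. exact A7.
  unfold dphi.
  change (RtoC 1 + (x, y))%C with ((1 + x)%R, (0 + y)%R).
  generalize (Cexp (RtoC eps * Clog ((1 + x)%R, (0 + y)%R))%C) (Cinv ((1 + x)%R, (0 + y)%R)).
  intros [a b] [c d]. apply injective_projections; simpl; ring.
Qed.

Lemma Cmod_sq (a b : R) : Cmod (a, b) * Cmod (a, b) = a * a + b * b.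
Proof. unfold Cmod; simpl. rewrite sqrt_sqrt by nra. ring. Qed.

Lemma polar (a b : R) : 0 < a ->
  a = Cmod (a, b) * cos (atan (b / a)) /\ b = Cmod (a, b) * sin (atan (b / a)).
Proof.
  intros Ha.
  assert (Hm : 0 < Cmod (a, b)). { apply Cmod_gt_0. intros E. injection E. lra. }
  assert (Hs : sqrt (1 + (b / a)²) = Cmod (a, b) / a).
  { rewrite <- (sqrt_Rsqr (Cmod (a, b) / a)). f_equal. unfold Rsqr.
    field_simplify. 2: lra. 2: lra. replace (Cmod (a, b) ^ 2) with (Cmod (a, b) * Cmod (a, b)) by ring. rewrite Cmod_sq. field. lra.
    apply Rlt_le, Rdiv_lt_0_compat; lra. }
  rewrite cos_atan, sin_atan, Hs. split; field; lra.
Qed.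

Lemma P_props (eps a b : R) : 0 < eps < 1 -> 1 <= a ->
  let P := (Cexp (RtoC eps * Clog (a, b)) * Cinv (a, b))%C in
  0 <= fst P /\ Cmod P <= 1.
Proof.
  intros He Ha P.
  assert (Hm : 0 < Cmod (a, b)). { apply Cmod_gt_0. intros E. injection E. lra. }
  assert (Hma : a <= Cmod (a, b)).
  { pose proof (Cmod_ge_fst (a, b)). simpl in H. rewrite Rabs_right in H; lra. }
  destruct (polar a b) as [Ea Eb]. lra.
  set (m := Cmod (a, b)) in *. set (t := atan (b / a)) in *.
  assert (Hlog : Clog (a, b) = (ln m, t)).
  { unfold Clog. f_equal. unfold Carg; simpl. destruct (Rlt_dec 0 a). reflexivity. lra. }
  split.
  - unfold P. rewrite Hlog. unfold Cexp, Cinv; simpl.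
    set (R0 := exp (eps * ln m - 0 * t)).
    assert (HR : 0 < R0) by apply exp_pos.
    replace (a * (a * 1) + b * (b * 1)) with (m * m) by (unfold m; rewrite Cmod_sq; ring).
    assert (Hc : 0 <= cos (eps * t + 0 * ln m) * a + sin (eps * t + 0 * ln m) * b).
    { rewrite Ea, Eb.
      replace (cos (eps * t + 0 * ln m) * (m * cos t) + sin (eps * t + 0 * ln m) * (m * sin t))
        with (m * cos (t - (eps * t + 0 * ln m))) by (rewrite cos_minus; ring).
      apply Rmult_le_pos. lra. left. apply cos_gt_0.
      pose proof (atan_bound (b / a)). fold t in H. nra.
      pose proof (atan_bound (b / a)). fold t in H. nra. }
    replace (R0 * cos (eps * t + 0 * ln m) * (a / (m * m)) -
       R0 * sin (eps * t + 0 * ln m) * (- b / (m * m)))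
     with (R0 / (m * m) * (cos (eps * t + 0 * ln m) * a + sin (eps * t + 0 * ln m) * b))
     by (field; lra).
    apply Rmult_le_pos. apply Rlt_le, Rdiv_lt_0_compat; nra. exact Hc.
  - unfold P. rewrite Cmod_mult, Cmod_inv.
    2: { intros E. injection E. lra. }
    fold m. rewrite Hlog. unfold Cexp; simpl.
    set (R0 := exp (eps * ln m - 0 * t)).
    assert (HR : 0 < R0) by apply exp_pos.
    assert (HC : Cmod (R0 * cos (eps * t + 0 * ln m), R0 * sin (eps * t + 0 * ln m)) = R0).
    { unfold Cmod; simpl. transitivity (sqrt (R0 * R0)). f_equal.
      pose proof (sin2_cos2 (eps * t + 0 * ln m)). unfold Rsqr in H. 
      transitivity (R0 * R0 * (sin (eps * t + 0 * ln m) * sin (eps * t + 0 * ln m) +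
          cos (eps * t + 0 * ln m) * cos (eps * t + 0 * ln m))). ring. rewrite H. ring.
      apply sqrt_square. lra. }
    rewrite HC.
    assert (R0 <= m).
    { unfold R0. rewrite <- (exp_ln m) at 2 by lra. 
      assert (0 <= ln m). { rewrite <- ln_1. apply ln_le; lra. }
      destruct (Req_dec (ln m) 0) as [E|E]. rewrite E. right. f_equal. ring.
      left. apply exp_increasing. nra. }
    apply Rmult_le_reg_r with m. lra. rewrite Rmult_assoc, Rinv_l by lra. lra.
Qed.

Lemma dphi_props Cc eps z : 0 < Cc -> 0 < eps < 1 -> 0 < fst z ->
  1 <= fst (dphi Cc eps z) /\ Cmod (dphi Cc eps z) <= 1 + Cc * eps.
Proof.
  intros HC He Hz. destruct z as [x y]. simpl in Hz. unfold dphi.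
  change (RtoC 1 + (x, y))%C with ((1 + x)%R, (0 + y)%R).
  destruct (P_props eps (1 + x) (0 + y) He ltac:(lra)) as [H1 H2].
  revert H1 H2. generalize (Cexp (RtoC eps * Clog ((1 + x)%R, (0 + y)%R)) * Cinv ((1 + x)%R, (0 + y)%R))%C.
  intros P H1 H2. split.
  - destruct P as [p q]. simpl in *. assert (0 <= Cc * (eps * p)) by (apply Rmult_le_pos; [lra | apply Rmult_le_pos; lra]). lra.
  - eapply Rle_trans. apply Cmod_triangle. rewrite Cmod_1, !Cmod_mult, !Cmod_R.
    rewrite !Rabs_right by lra. apply Rplus_le_compat_l, Rmult_le_compat_l. lra. rewrite <- (Rmult_1_r eps) at 2. apply Rmult_le_compat_l; lra.
Qed.

Lemma fst_le_Cmod (z : C) : fst z <= Cmod z.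
Proof. pose proof (Cmod_ge_fst z). pose proof (Rle_abs (fst z)). lra. Qed.

Lemma Cmod_sq' (z : C) : Cmod z * Cmod z = fst z * fst z + snd z * snd z.
Proof. destruct z; apply Cmod_sq. Qed.

Lemma real_deriv_line (f : C -> C) (z d u l : C) (t : R) :
  @is_derive C_AbsRing C_NormedModule f (z + RtoC t * d)%C l ->
  derivable_pt_lim (fun s => fst (u * f (z + RtoC s * d))%C) t (fst (u * (d * l))%C).
Proof.
  intros Hf. rewrite deriv_C_iff in Hf.
  intros eps He.
  set (K := Cmod u * Cmod d + 1).
  assert (HK : 0 < K) by (unfold K; pose proof (Cmod_ge_0 u); pose proof (Cmod_ge_0 d); nra).
  destruct (Hf (eps / (2 * K))) as [dl [Hdl Hw]]. apply Rdiv_lt_0_compat; lra.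
  assert (Hd1 : 0 < Cmod d + 1) by (pose proof (Cmod_ge_0 d); lra).
  exists (mkposreal (dl / (Cmod d + 1)) (Rdiv_lt_0_compat _ _ Hdl Hd1)). simpl.
  intros h Hh0 Hh.
  set (z0 := (z + RtoC t * d)%C). set (w := (z + RtoC (t + h) * d)%C).
  assert (Ewz : (w - z0)%C = (RtoC h * d)%C).
  { unfold w, z0. destruct z, d; apply injective_projections; simpl; ring. }
  assert (Hwz : Cmod (w - z0) = Rabs h * Cmod d) by (rewrite Ewz, Cmod_mult, Cmod_R; reflexivity).
  assert (Hlt : Cmod (w - z0) < dl).
  { rewrite Hwz. pose proof (Cmod_ge_0 d). pose proof (Rabs_pos h).
    apply Rlt_le_trans with (dl / (Cmod d + 1) * (Cmod d + 1)).
    apply Rle_lt_trans with (Rabs h * (Cmod d + 1)). nra.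
    apply Rmult_lt_compat_r; lra. right; field; lra. }
  specialize (Hw w Hlt).
  assert (E : fst (u * f w)%C - fst (u * f z0)%C - h * fst (u * (d * l))%C =
              fst (u * (f w - f z0 - (w - z0) * l))%C).
  { rewrite Ewz. destruct u, (f w), (f z0), d, l. simpl. ring. }
  assert (Hb : Rabs (fst (u * f w)%C - fst (u * f z0)%C - h * fst (u * (d * l))%C)
     <= Cmod u * (eps / (2 * K) * (Rabs h * Cmod d))).
  { rewrite E. eapply Rle_trans. apply Cmod_ge_fst. rewrite Cmod_mult.
    apply Rmult_le_compat_l. apply Cmod_ge_0. rewrite <- Hwz. exact Hw. }
  change (Rabs ((fst (u * f w)%C - fst (u * f z0)%C) / h - fst (u * (d * l))%C) < eps).
  replace ((fst (u * f w)%C - fst (u * f z0)%C) / h - fst (u * (d * l))%C) with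
    ((fst (u * f w)%C - fst (u * f z0)%C - h * fst (u * (d * l))%C) / h) by (field; exact Hh0).
  unfold Rdiv at 1. rewrite Rabs_mult, Rabs_inv.
  assert (Hah : 0 < Rabs h) by (apply Rabs_pos_lt; exact Hh0).
  apply Rle_lt_trans with (Cmod u * (eps / (2 * K) * (Rabs h * Cmod d)) * / Rabs h).
  apply Rmult_le_compat_r. left; apply Rinv_0_lt_compat; lra. exact Hb.
  replace (Cmod u * (eps / (2 * K) * (Rabs h * Cmod d)) * / Rabs h) with
    (eps / 2 * ((Cmod u * Cmod d) / K)) by (field; lra).
  assert ((Cmod u * Cmod d) / K < 1).
  { apply (Rmult_lt_reg_r K). lra. unfold Rdiv. rewrite Rmult_assoc, Rinv_l by lra. unfold K. lra. }
  pose proof (Cmod_ge_0 u). pose proof (Cmod_ge_0 d).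
  assert (0 <= Cmod u * Cmod d / K) by (apply Rmult_le_pos; [nra | left; apply Rinv_0_lt_compat; lra]).
  nra.
Qed.

Lemma seg_mvt Cc eps (z1 z2 u : C) : 0 < fst z1 -> 0 < fst z2 ->
  exists p : C, 0 < fst p /\
    fst (u * phi Cc eps z2)%C - fst (u * phi Cc eps z1)%C = fst (u * ((z2 - z1) * dphi Cc eps p))%C.
Proof.
  intros H1 H2.
  set (d := (z2 - z1)%C).
  destruct (MVT_cor2 (fun s => fst (u * phi Cc eps (z1 + RtoC s * d))%C)
     (fun s => fst (u * (d * dphi Cc eps (z1 + RtoC s * d)))%C) 0 1 Rlt_0_1) as [c [Hc Hcr]].
  { intros c Hc. apply real_deriv_line. apply phi_deriv.
    unfold d; destruct z1, z2; simpl in *. nra. }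
  exists (z1 + RtoC c * d)%C. split.
  { unfold d; destruct z1, z2; simpl in *. nra. }
  replace (z1 + RtoC 1 * d)%C with z2 in Hc by (unfold d; destruct z1, z2; apply injective_projections; simpl; ring).
  replace (z1 + RtoC 0 * d)%C with z1 in Hc by (unfold d; destruct z1, z2; apply injective_projections; simpl; ring).
  rewrite Hc. ring.
Qed.

Lemma phi_mono Cc eps (z1 z2 : C) : 0 < Cc -> 0 < eps < 1 -> 0 < fst z1 -> 0 < fst z2 ->
  fst (z2 - z1)%C * fst (phi Cc eps z2 - phi Cc eps z1)%C + snd (z2 - z1)%C * snd (phi Cc eps z2 - phi Cc eps z1)%C
  >= fst (z2 - z1)%C * fst (z2 - z1)%C + snd (z2 - z1)%C * snd (z2 - z1)%C.
Proof.
  intros HC He H1 H2.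
  destruct (seg_mvt Cc eps z1 z2 (fst (z2 - z1)%C, - snd (z2 - z1)%C) H1 H2) as [p [Hp E]].
  destruct (dphi_props Cc eps p HC He Hp) as [Hl _].
  revert E Hl. generalize (dphi Cc eps p). intros [l1 l2] E Hl. simpl in Hl.
  destruct (phi Cc eps z2) as [a1 a2], (phi Cc eps z1) as [b1 b2], z2 as [x2 y2], z1 as [x1 y1]. simpl in *.
  set (d1 := x2 + - x1) in *. set (d2 := y2 + - y1) in *.
  assert (E2 : d1 * (a1 + - b1) + d2 * (a2 + - b2) = (d1 * d1 + d2 * d2) * l1) by (rewrite <- Rminus_0_r at 1; lra).
  assert (0 <= d1 * d1 + d2 * d2) by nra.
  nra.
Qed.

Lemma phi_lip Cc eps (z1 z2 : C) : 0 < Cc -> 0 < eps < 1 -> 0 < fst z1 -> 0 < fst z2 ->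
  Cmod (phi Cc eps z2 - phi Cc eps z1)%C <= (1 + Cc * eps) * Cmod (z2 - z1)%C.
Proof.
  intros HC He H1 H2.
  set (D := (phi Cc eps z2 - phi Cc eps z1)%C).
  set (u := (fst D, (- snd D)%R)).
  destruct (seg_mvt Cc eps z1 z2 u H1 H2) as [p [Hp E]].
  destruct (dphi_props Cc eps p HC He Hp) as [_ Hl].
  assert (ED : fst (u * phi Cc eps z2)%C - fst (u * phi Cc eps z1)%C = Cmod D * Cmod D).
  { unfold u, D. destruct (phi Cc eps z2), (phi Cc eps z1). rewrite Cmod_sq'. simpl. ring. }
  assert (Hu : Cmod u = Cmod D).
  { unfold u. destruct D. unfold Cmod. simpl. f_equal. ring. }
  rewrite ED in E.
  assert (Hb : Cmod D * Cmod D <= Cmod D * ((1 + Cc * eps) * Cmod (z2 - z1)%C)).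
  { rewrite E. eapply Rle_trans. apply fst_le_Cmod. rewrite !Cmod_mult, Hu.
    apply Rmult_le_compat_l. apply Cmod_ge_0. rewrite Rmult_comm. apply Rmult_le_compat_r.
    apply Cmod_ge_0. exact Hl. }
  pose proof (Cmod_ge_0 D). pose proof (Cmod_ge_0 (z2 - z1)%C).
  destruct (Req_dec (Cmod D) 0) as [Z|Z]. rewrite Z. apply Rmult_le_pos; [nra | lra].
  apply (Rmult_le_reg_l (Cmod D)). lra. exact Hb.
Qed.

Section Contr.
Variables (Cc eps : R) (HC : 0 < Cc) (He : 0 < eps < 1).

Definition LL := 1 + Cc * eps.
Definition lam := / (LL * LL).
Definition qq := sqrt (1 - lam).
Definition TT (w z : C) : C := (z - RtoC lam * (phi Cc eps z - w))%C.

Lemma LL_gt1 : 1 < LL.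
Proof. unfold LL. nra. Qed.

Lemma lam_bounds : 0 < lam < 1.
Proof. pose proof LL_gt1. unfold lam. split. apply Rinv_0_lt_compat; nra.
  rewrite <- Rinv_1. apply Rinv_lt_contravar; nra. Qed.

Lemma qq_bounds : 0 <= qq < 1.
Proof. pose proof lam_bounds. unfold qq. split. apply sqrt_pos.
  apply Rlt_le_trans with (sqrt 1). apply sqrt_lt_1_alt; split; lra. rewrite sqrt_1; lra. Qed.

Lemma TT_contr (w z1 z2 : C) : 0 < fst z1 -> 0 < fst z2 ->
  Cmod (TT w z2 - TT w z1)%C <= qq * Cmod (z2 - z1)%C.
Proof.
  intros H1 H2.
  pose proof (phi_mono Cc eps z1 z2 HC He H1 H2) as Hm.
  pose proof (phi_lip Cc eps z1 z2 HC He H1 H2) as Hl.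
  pose proof lam_bounds as Hlam. pose proof LL_gt1 as HL.
  assert (Hl2 : Cmod (phi Cc eps z2 - phi Cc eps z1)%C * Cmod (phi Cc eps z2 - phi Cc eps z1)%C
       <= (LL * LL) * (Cmod (z2 - z1)%C * Cmod (z2 - z1)%C)).
  { pose proof (Cmod_ge_0 (phi Cc eps z2 - phi Cc eps z1)%C). fold LL in Hl.
    pose proof (Cmod_ge_0 (z2 - z1)%C). nra. }
  rewrite !Cmod_sq' in Hl2.
  assert (Hsq : Cmod (TT w z2 - TT w z1)%C * Cmod (TT w z2 - TT w z1)%C <=
     (1 - lam) * (Cmod (z2 - z1)%C * Cmod (z2 - z1)%C)).
  { rewrite !Cmod_sq'. unfold TT.
    destruct (phi Cc eps z2) as [a1 a2], (phi Cc eps z1) as [b1 b2], z2 as [x2 y2], z1 as [x1 y1], w as [w1 w2].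
    simpl in *.
    assert (Hlam1 : lam * (LL * LL) = 1) by (unfold lam; field; lra).
    set (d1 := x2 + - x1) in *. set (d2 := y2 + - y1) in *.
    set (D1 := a1 + - b1) in *. set (D2 := a2 + - b2) in *.
    replace (x2 + - (lam * (a1 + - w1) - 0 * (a2 + - w2)) + - (x1 + - (lam * (b1 + - w1) - 0 * (b2 + - w2))))
      with (d1 - lam * D1) by (unfold d1, D1; ring).
    replace (y2 + - (lam * (a2 + - w2) + 0 * (a1 + - w1)) + - (y1 + - (lam * (b2 + - w2) + 0 * (b1 + - w1))))
      with (d2 - lam * D2) by (unfold d2, D2; ring).
    assert (lam * lam * (D1 * D1 + D2 * D2) <= lam * (d1 * d1 + d2 * d2)).
    { apply Rle_trans with (lam * lam * (LL * LL * (d1 * d1 + d2 * d2))).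
      apply Rmult_le_compat_l. nra. exact Hl2. right.
      transitivity (lam * (lam * (LL * LL)) * (d1 * d1 + d2 * d2)). ring. rewrite Hlam1. ring. }
    nra. }
  unfold qq. rewrite <- (sqrt_square (Cmod (TT w z2 - TT w z1)%C)) by apply Cmod_ge_0.
  rewrite <- (sqrt_square (Cmod (z2 - z1)%C)) by apply Cmod_ge_0.
  rewrite <- sqrt_mult_alt by lra. apply sqrt_le_1_alt. exact Hsq.
Qed.


Fixpoint iterT (w z0 : C) (n : nat) : C :=
  match n with O => z0 | S k => TT w (iterT w z0 k) end.

Lemma Cmod_tri3 (x y z : C) : Cmod (x - z)%C <= Cmod (x - y)%C + Cmod (y - z)%C.
Proof.
  replace (x - z)%C with ((x - y) + (y - z))%C by (destruct x, y, z; apply injective_projections; simpl; ring).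
  apply Cmod_triangle.
Qed.

Lemma Cmod_self (z : C) : Cmod (z - z)%C = 0.
Proof. replace (z - z)%C with (RtoC 0) by (destruct z; apply injective_projections; simpl; ring). apply Cmod_0. Qed.

Lemma fst_close (x z : C) (r : R) : Cmod (x - z)%C <= r -> fst z - r <= fst x.
Proof. intros H. pose proof (Cmod_ge_fst (x - z)%C). destruct x as [x1 x2], z as [z1 z2]. simpl in *.
  pose proof (Rabs_maj2 (x1 + - z1)). lra. Qed.

Lemma fst_diff (x y : C) : Rabs (fst x - fst y) <= Cmod (x - y)%C.
Proof. pose proof (Cmod_ge_fst (x - y)%C). destruct x, y. simpl in *. exact H. Qed.
Lemma snd_diff (x y : C) : Rabs (snd x - snd y) <= Cmod (x - y)%C.
Proof. pose proof (Cmod_ge_snd (x - y)%C). destruct x, y. simpl in *. exact H. Qed.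

Lemma pow_q_bounds n : 0 <= qq ^ n <= 1.
Proof. pose proof qq_bounds. split. apply pow_le; lra. induction n; simpl; [lra|]. pose proof (pow_le qq n). nra. Qed.

Lemma pow_q_decr n m : (n <= m)%nat -> qq ^ m <= qq ^ n.
Proof.
  intros H. replace m with (n + (m - n))%nat by lia. rewrite pow_add.
  pose proof (pow_q_bounds n). pose proof (pow_q_bounds (m - n)). nra.
Qed.

Lemma lim_bound (u : nat -> R) l n c K : Un_cv u l ->
  (forall m, (n <= m)%nat -> Rabs (u m - c) <= K) -> Rabs (l - c) <= K.
Proof.
  intros Hu Hb. destruct (Rle_lt_dec (Rabs (l - c)) K) as [H|H]. exact H. exfalso.
  destruct (Hu (Rabs (l - c) - K)) as [N HN]. lra.
  specialize (HN (Nat.max N n) (Nat.le_max_l N n)). specialize (Hb (Nat.max N n) (Nat.le_max_r N n)).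
  unfold R_dist in HN.
  pose proof (Rabs_triang (l - u (Nat.max N n)) (u (Nat.max N n) - c)).
  replace (l - u (Nat.max N n) + (u (Nat.max N n) - c)) with (l - c) in H0 by ring.
  rewrite Rabs_minus_sym in HN. lra.
Qed.

Section Iter.
Variables (w z0 : C) (Hz0 : 0 < fst z0).
Let a := Cmod (TT w z0 - z0)%C.
Let B := a / (1 - qq).
Hypothesis HB : B < fst z0.

Lemma B_pos : 0 <= B.
Proof. pose proof qq_bounds. unfold B. apply Rmult_le_pos. apply Cmod_ge_0. left; apply Rinv_0_lt_compat; lra. Qed.

Lemma a_eq : a = B * (1 - qq).
Proof. pose proof qq_bounds. unfold B. field. lra. Qed.

Lemma iter_inv n : Cmod (iterT w z0 (S n) - iterT w z0 n)%C <= qq ^ n * a /\ Cmod (iterT w z0 n - z0)%C <= B * (1 - qq ^ n).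
Proof.
  pose proof qq_bounds. pose proof B_pos. pose proof a_eq.
  induction n as [|n [IH1 IH2]].
  - simpl. rewrite Cmod_self. fold a. lra.
  - assert (C2 : Cmod (iterT w z0 (S n) - z0)%C <= B * (1 - qq ^ S n)).
    { eapply Rle_trans. apply (Cmod_tri3 _ (iterT w z0 n)). simpl pow.
      rewrite H1 in IH1. nra. }
    split; [|exact C2].
    change (iterT w z0 (S (S n))) with (TT w (iterT w z0 (S n))).
    change (iterT w z0 (S n)) with (TT w (iterT w z0 n)) at 2.
    eapply Rle_trans. apply TT_contr.
    + apply fst_close in IH2. pose proof (pow_q_bounds n). nra.
    + apply fst_close in C2. pose proof (pow_q_bounds (S n)). nra.
    + simpl pow. pose proof (Cmod_ge_0 (iterT w z0 (S n) - iterT w z0 n)%C). nra.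
Qed.

Lemma iter_H0 n : 0 < fst (iterT w z0 n).
Proof.
  destruct (iter_inv n) as [_ H]. apply fst_close in H. pose proof (pow_q_bounds n). pose proof B_pos. nra.
Qed.

Lemma iter_cauchy n k : Cmod (iterT w z0 (n + k) - iterT w z0 n)%C <= qq ^ n * B * (1 - qq ^ k).
Proof.
  pose proof qq_bounds. pose proof B_pos. pose proof a_eq.
  induction k as [|k IH].
  - rewrite Nat.add_0_r, Cmod_self. simpl. lra.
  - rewrite Nat.add_succ_r. eapply Rle_trans. apply (Cmod_tri3 _ (iterT w z0 (n + k))).
    destruct (iter_inv (n + k)) as [H2 _]. rewrite pow_add in H2.
    simpl pow. pose proof (pow_q_bounds n). pose proof (pow_q_bounds k). rewrite H1 in H2. nra.
Qed.

Lemma iter_cauchy' n m : (n <= m)%nat -> Cmod (iterT w z0 m - iterT w z0 n)%C <= qq ^ n * B.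
Proof.
  intros H. replace m with (n + (m - n))%nat by lia.
  eapply Rle_trans. apply iter_cauchy. pose proof (pow_q_bounds n). pose proof (pow_q_bounds (m - n)).
  pose proof B_pos. assert (0 <= qq ^ n * B) by (apply Rmult_le_pos; lra). nra.
Qed.


Lemma comp_cauchy (f : C -> R) (Hf : forall x y, Rabs (f x - f y) <= Cmod (x - y)%C) :
  Cauchy_crit (fun n => f (iterT w z0 n)).
Proof.
  intros e Hep. pose proof qq_bounds. pose proof B_pos.
  destruct (pow_lt_1_zero qq ltac:(rewrite Rabs_right; lra) (e / (B + 1)) ltac:(apply Rdiv_lt_0_compat; lra)) as [N HN].
  exists N. intros n m Hn Hm. unfold R_dist.
  specialize (HN N (Nat.le_refl N)). rewrite Rabs_right in HN by (apply Rle_ge, pow_le; lra).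
  assert (HNB : qq ^ N * B < e).
  { apply Rle_lt_trans with (qq ^ N * (B + 1)). pose proof (pow_le qq N). nra.
    apply (Rmult_lt_compat_r (B + 1)) in HN. unfold Rdiv in HN. rewrite Rmult_assoc, Rinv_l in HN; lra. lra. }
  destruct (Nat.le_ge_cases n m) as [Hnm|Hnm].
  - rewrite Rabs_minus_sym. eapply Rle_lt_trans. apply Hf. eapply Rle_lt_trans. apply iter_cauchy'. exact Hnm.
    eapply Rle_lt_trans. 2: exact HNB. apply Rmult_le_compat_r. lra. apply pow_q_decr. exact Hn.
  - eapply Rle_lt_trans. apply Hf. eapply Rle_lt_trans. apply iter_cauchy'. exact Hnm.
    eapply Rle_lt_trans. 2: exact HNB. apply Rmult_le_compat_r. lra. apply pow_q_decr. exact Hm.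
Qed.

Lemma exists_sol : exists z, 0 < fst z /\ phi Cc eps z = w.
Proof.
  pose proof qq_bounds. pose proof B_pos. pose proof a_eq. pose proof lam_bounds. pose proof LL_gt1.
  destruct (Rcomplete.R_complete _ (comp_cauchy fst fst_diff)) as [l1 Hl1].
  destruct (Rcomplete.R_complete _ (comp_cauchy snd snd_diff)) as [l2 Hl2].
  assert (B1 : forall n, Rabs (l1 - fst (iterT w z0 n)) <= qq ^ n * B).
  { intros n. apply (lim_bound _ _ n _ _ Hl1). intros m Hm. eapply Rle_trans. apply fst_diff. apply iter_cauchy'. exact Hm. }
  assert (B2 : forall n, Rabs (l2 - snd (iterT w z0 n)) <= qq ^ n * B).
  { intros n. apply (lim_bound _ _ n _ _ Hl2). intros m Hm. eapply Rle_trans. apply snd_diff. apply iter_cauchy'. exact Hm. }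
  assert (Hpos : 0 < l1).
  { specialize (B1 O). simpl in B1. pose proof (Rabs_maj2 (l1 - fst z0)). lra. }
  exists (l1, l2). split. exact Hpos.
  set (zs := (l1, l2)).
  assert (D1 : forall n, Cmod (zs - iterT w z0 n)%C <= 2 * (qq ^ n * B)).
  { intros n. specialize (B1 n). specialize (B2 n). destruct (iterT w z0 n) as [x y]. simpl in *.
    eapply Rle_trans. apply Cmod_le_abs. simpl. unfold Rminus in B1, B2. lra. }
  assert (D2 : forall n, Cmod (phi Cc eps (iterT w z0 n) - w)%C <= qq ^ n * a / lam).
  { intros n. destruct (iter_inv n) as [H5 _].
    replace (iterT w z0 (S n) - iterT w z0 n)%C with (RtoC (- lam) * (phi Cc eps (iterT w z0 n) - w))%C in H5.
    rewrite Cmod_mult, Cmod_R, Rabs_left in H5 by lra.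
    apply (Rmult_le_reg_l lam). lra. replace (lam * (qq ^ n * a / lam)) with (qq ^ n * a) by (field; lra). lra.
    simpl. unfold TT. destruct (iterT w z0 n), (phi Cc eps (r, r0)), w. apply injective_projections; simpl; ring. }
  set (K := LL * (2 * B) + a / lam).
  assert (HK : 0 <= K).
  { unfold K. apply Rplus_le_le_0_compat. nra. apply Rmult_le_pos. apply Cmod_ge_0. left; apply Rinv_0_lt_compat; lra. }
  assert (D3 : forall n, Cmod (phi Cc eps zs - w)%C <= qq ^ n * K).
  { intros n. eapply Rle_trans. apply (Cmod_tri3 _ (phi Cc eps (iterT w z0 n))).
    pose proof (phi_lip Cc eps (iterT w z0 n) zs HC He (iter_H0 n) Hpos) as HL. fold LL in HL.
    specialize (D1 n). specialize (D2 n).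
    assert (Cmod (iterT w z0 n - zs)%C = Cmod (zs - iterT w z0 n)%C).
    { destruct (iterT w z0 n), zs. unfold Cmod. simpl. f_equal. ring. }
    assert (Cmod (phi Cc eps zs - phi Cc eps (iterT w z0 n))%C <= LL * (2 * (qq ^ n * B))).
    { eapply Rle_trans. exact HL. apply Rmult_le_compat_l. lra. congruence. }
    unfold K. unfold Rdiv in *. nra. }
  assert (Z : Cmod (phi Cc eps zs - w)%C = 0).
  { destruct (Req_dec (Cmod (phi Cc eps zs - w)%C) 0) as [E|E]. exact E. exfalso.
    pose proof (Cmod_ge_0 (phi Cc eps zs - w)%C).
    set (c := Cmod (phi Cc eps zs - w)%C) in *.
    destruct (pow_lt_1_zero qq ltac:(rewrite Rabs_right; lra) (c / (K + 1)) ltac:(apply Rdiv_lt_0_compat; lra)) as [N HN].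
    specialize (HN N (Nat.le_refl N)). rewrite Rabs_right in HN by (apply Rle_ge, pow_le; lra).
    apply (Rmult_lt_compat_r (K + 1)) in HN. unfold Rdiv in HN. rewrite Rmult_assoc, Rinv_l in HN by lra.
    specialize (D3 N). pose proof (pow_le qq N). nra. lra. }
  apply Cmod_eq_0 in Z. destruct (phi Cc eps zs), w. injection Z. intros. apply injective_projections; simpl; lra.
Qed.

End Iter.
End Contr.

Lemma phi_expand Cc eps (z1 z2 : C) : 0 < Cc -> 0 < eps < 1 -> 0 < fst z1 -> 0 < fst z2 ->
  Cmod (z2 - z1)%C <= Cmod (phi Cc eps z2 - phi Cc eps z1)%C.
Proof.
  intros HC He H1 H2. pose proof (phi_mono Cc eps z1 z2 HC He H1 H2) as Hm.
  set (d := (z2 - z1)%C) in *. set (D := (phi Cc eps z2 - phi Cc eps z1)%C) in *.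
  assert (Hcs : fst d * fst D + snd d * snd D <= Cmod d * Cmod D).
  { pose proof (fst_le_Cmod ((fst d, (- snd d)%R) * D)%C). rewrite Cmod_mult in H.
    replace (Cmod (fst d, (- snd d)%R)) with (Cmod d) in H by (destruct d; unfold Cmod; simpl; f_equal; ring).
    destruct d, D. simpl in *. lra. }
  rewrite <- Cmod_sq' in Hm.
  pose proof (Cmod_ge_0 d). pose proof (Cmod_ge_0 D).
  destruct (Req_dec (Cmod d) 0) as [Z|Z]. lra.
  apply (Rmult_le_reg_l (Cmod d)). lra. lra.
Qed.

Lemma H0_open : open_C H0.
Proof.
  intros z Hz. unfold H0, Re in *. exists (fst z). split. exact Hz. intros w Hw.
  assert (Cmod (w - z)%C <= Cmod (w - z)%C) by lra. apply fst_close in H. lra.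
Qed.

Section Main1.
Variables (Cc eps : R) (HC : 0 < Cc) (He : 0 < eps < 1).

Lemma phi_inj z1 z2 : H0 z1 -> H0 z2 -> phi Cc eps z1 = phi Cc eps z2 -> z1 = z2.
Proof.
  unfold H0, Re. intros H1 H2 E.
  pose proof (phi_expand Cc eps z1 z2 HC He H1 H2). rewrite E in H.
  rewrite Cmod_self in H. pose proof (Cmod_ge_0 (z2 - z1)%C).
  assert (Z : Cmod (z2 - z1)%C = 0) by lra. apply Cmod_eq_0 in Z.
  destruct z1, z2. injection Z; intros. apply injective_projections; simpl; lra.
Qed.

Definition orad (z0 : C) := fst z0 * (1 - qq Cc eps) / lam Cc eps.

Lemma orad_pos z0 : 0 < fst z0 -> 0 < orad z0.
Proof.
  intros H. pose proof (qq_bounds Cc eps HC He). pose proof (lam_bounds Cc eps HC He).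
  unfold orad. apply Rdiv_lt_0_compat; nra.
Qed.

Lemma local_surj z0 w : 0 < fst z0 -> Cmod (w - phi Cc eps z0)%C < orad z0 ->
  exists z, 0 < fst z /\ phi Cc eps z = w.
Proof.
  intros H Hw. apply (exists_sol Cc eps HC He w z0).
  pose proof (qq_bounds Cc eps HC He). pose proof (lam_bounds Cc eps HC He).
  replace (TT Cc eps w z0 - z0)%C with (RtoC (- lam Cc eps) * (phi Cc eps z0 - w))%C
    by (unfold TT; destruct z0, (phi Cc eps _), w; apply injective_projections; simpl; ring).
  rewrite Cmod_mult, Cmod_R, Rabs_left by lra.
  replace (Cmod (phi Cc eps z0 - w)%C) with (Cmod (w - phi Cc eps z0)%C)
    by (destruct w, (phi Cc eps z0); unfold Cmod; simpl; f_equal; ring).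
  unfold orad in Hw. apply (Rmult_lt_compat_l (lam Cc eps)) in Hw. 2: lra.
  replace (lam Cc eps * (fst z0 * (1 - qq Cc eps) / lam Cc eps)) with (fst z0 * (1 - qq Cc eps)) in Hw by (field; lra).
  apply (Rmult_lt_reg_r (1 - qq Cc eps)). lra. unfold Rdiv. rewrite Rmult_assoc, Rinv_l by lra. lra.
Qed.

Definition ginv (w : C) : C := epsilon (inhabits (RtoC 0)) (fun z => H0 z /\ phi Cc eps z = w).

Lemma ginv_phi z : H0 z -> ginv (phi Cc eps z) = z.
Proof.
  intros Hz. unfold ginv.
  destruct (epsilon_spec (inhabits (RtoC 0)) (fun z' => H0 z' /\ phi Cc eps z' = phi Cc eps z)) as [H1 H2].
  exists z. split; auto.
  apply phi_inj; auto.
Qed.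

Lemma ginv_deriv z0 : H0 z0 ->
  @is_derive C_AbsRing C_NormedModule ginv (phi Cc eps z0) (/ dphi Cc eps z0)%C.
Proof.
  intros Hz0. unfold H0, Re in Hz0.
  pose proof (phi_deriv Cc eps z0 Hz0) as Hd. rewrite deriv_C_iff in Hd.
  destruct (dphi_props Cc eps z0 HC He Hz0) as [Hl1 _].
  set (l := dphi Cc eps z0) in *.
  assert (Hl : 1 <= Cmod l) by (pose proof (fst_le_Cmod l); lra).
  assert (Hl0 : l <> RtoC 0) by (intros E; rewrite E, Cmod_0 in Hl; lra).
  apply deriv_C_iff. intros e He'.
  destruct (Hd e He') as [d1 [Hd1 Hw]].
  exists (Rmin d1 (orad z0)). split. apply Rmin_pos. exact Hd1. apply orad_pos. exact Hz0.
  intros w Hwd.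
  destruct (local_surj z0 w Hz0) as [z [Hz Ez]].
  { eapply Rlt_le_trans. exact Hwd. apply Rmin_r. }
  subst w. rewrite !ginv_phi by (unfold H0, Re; assumption).
  pose proof (phi_expand Cc eps z0 z HC He Hz0 Hz) as Hexp.
  assert (Hzd : Cmod (z - z0)%C < d1).
  { eapply Rle_lt_trans. exact Hexp. eapply Rlt_le_trans. exact Hwd. apply Rmin_l. }
  specialize (Hw z Hzd).
  replace (z - z0 - (phi Cc eps z - phi Cc eps z0) * / l)%C with
     (- ((phi Cc eps z - phi Cc eps z0 - (z - z0) * l) * / l))%C by (field; exact Hl0).
  replace (Cmod (- ((phi Cc eps z - phi Cc eps z0 - (z - z0) * l) * / l))%C) with
     (Cmod ((phi Cc eps z - phi Cc eps z0 - (z - z0) * l) * / l)%C)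
     by (destruct ((phi Cc eps z - phi Cc eps z0 - (z - z0) * l) * / l)%C; unfold Cmod; simpl; f_equal; ring).
  rewrite Cmod_mult, Cmod_inv by exact Hl0.
  pose proof (Cmod_ge_0 (phi Cc eps z - phi Cc eps z0 - (z - z0) * l)%C).
  assert (/ Cmod l <= 1). { rewrite <- Rinv_1. apply Rinv_le_contravar; lra. }
  assert (0 < / Cmod l) by (apply Rinv_0_lt_compat; lra).
  apply Rle_trans with (Cmod (phi Cc eps z - phi Cc eps z0 - (z - z0) * l)%C). nra.
  eapply Rle_trans. exact Hw. apply Rmult_le_compat_l; lra.
Qed.

Theorem part1 : biholomorphic_onto_image (phi Cc eps) H0.
Proof.
  split. exact H0_open. split.
  { intros z Hz. exists (dphi Cc eps z). apply phi_deriv. exact Hz. }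
  split. exact phi_inj.
  split.
  { intros w [z0 [Hz0 ->]]. exists (orad z0). split. apply orad_pos. exact Hz0.
    intros w Hw. destruct (local_surj z0 w Hz0 Hw) as [z [Hz E]]. exists z. split. exact Hz. congruence. }
  exists ginv. split. exact ginv_phi.
  intros w [z0 [Hz0 ->]]. exists (/ dphi Cc eps z0)%C. apply ginv_deriv. exact Hz0.
Qed.

End Main1.

Definition mR r := sqrt (1 + r * r).
Definition ReP Cc eps r := Cc * Rpower (mR r) eps * cos (eps * atan r).
Definition ImP Cc eps r := r + Cc * Rpower (mR r) eps * sin (eps * atan r).

Lemma Clog_ir r : Clog (RtoC 1 + Ci * RtoC r)%C = (ln (mR r), atan r).
Proof.
  replace (RtoC 1 + Ci * RtoC r)%C with ((1, r) : C) by (apply injective_projections; simpl; ring).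
  unfold Clog, Carg; simpl. destruct (Rlt_dec 0 1) as [_|H]; [|lra].
  f_equal. unfold mR, Cmod; simpl. f_equal. f_equal. ring. f_equal. field.
Qed.

Lemma Re_phi_ir Cc eps r : Re (phi Cc eps (Ci * RtoC r)) = ReP Cc eps r.
Proof.
  unfold phi, Cpow_pr. rewrite Clog_ir. unfold Cexp, ReP, Rpower, Re. simpl.
  replace (eps * ln (mR r) - 0 * atan r) with (eps * ln (mR r)) by ring.
  replace (eps * atan r + 0 * ln (mR r)) with (eps * atan r) by ring. ring.
Qed.

Lemma Im_phi_ir Cc eps r : Im (phi Cc eps (Ci * RtoC r)) = ImP Cc eps r.
Proof.
  unfold phi, Cpow_pr. rewrite Clog_ir. unfold Cexp, ImP, Rpower, Im. simpl.
  replace (eps * ln (mR r) - 0 * atan r) with (eps * ln (mR r)) by ring.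
  replace (eps * atan r + 0 * ln (mR r)) with (eps * atan r) by ring. ring.
Qed.

Lemma mR_pos r : 0 < mR r.
Proof. unfold mR. apply sqrt_lt_R0. nra. Qed.

Lemma mR_split r : 0 < r -> mR r = r * mR (/ r).
Proof.
  intros Hr. unfold mR. replace (1 + r * r) with ((r * r) * (1 + / r * / r)) by (field; lra).
  rewrite sqrt_mult_alt by nra. rewrite sqrt_square by lra. reflexivity.
Qed.

Lemma atan_split r : 0 < r -> atan r = PI / 2 - atan (/ r).
Proof. intros Hr. rewrite atan_inv by exact Hr. ring. Qed.

Definition Gc eps t := Rpower (mR t) eps * cos (eps * (PI / 2 - atan t)).
Definition Gs eps t := Rpower (mR t) eps * sin (eps * (PI / 2 - atan t)).

Lemma ReP_split Cc eps r : 0 < r -> ReP Cc eps r = Cc * Rpower r eps * Gc eps (/ r).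
Proof.
  intros Hr. unfold ReP, Gc. rewrite mR_split by exact Hr. rewrite <- Rpower_mult_distr by (try apply mR_pos; lra).
  rewrite atan_split by exact Hr. ring.
Qed.

Lemma ImP_split Cc eps r : 0 < r -> ImP Cc eps r = r + Cc * Rpower r eps * Gs eps (/ r).
Proof.
  intros Hr. unfold ImP, Gs. rewrite mR_split by exact Hr. rewrite <- Rpower_mult_distr by (try apply mR_pos; lra).
  rewrite atan_split by exact Hr. ring.
Qed.

Lemma Rpower_1_base a : Rpower 1 a = 1.
Proof. unfold Rpower. rewrite ln_1, Rmult_0_r. apply exp_0. Qed.

Lemma mR_0 : mR 0 = 1.
Proof. unfold mR. replace (1 + 0 * 0) with 1 by ring. apply sqrt_1. Qed.

Lemma Gc_0 eps : Gc eps 0 = cos (eps * (PI / 2)).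
Proof. unfold Gc. rewrite mR_0, Rpower_1_base, atan_0, Rmult_1_l. f_equal. ring. Qed.
Lemma Gs_0 eps : Gs eps 0 = sin (eps * (PI / 2)).
Proof. unfold Gs. rewrite mR_0, Rpower_1_base, atan_0, Rmult_1_l. f_equal. ring. Qed.

Lemma Gc_cont eps : continuity_pt (Gc eps) 0.
Proof.
  apply continuity_pt_filterlim. apply (ex_derive_continuous (Gc eps)).
  unfold Gc, mR, Rpower. auto_derive. repeat split; try nra. apply sqrt_lt_R0; nra.
Qed.
Lemma Gs_cont eps : continuity_pt (Gs eps) 0.
Proof.
  apply continuity_pt_filterlim. apply (ex_derive_continuous (Gs eps)).
  unfold Gs, mR, Rpower. auto_derive. repeat split; try nra. apply sqrt_lt_R0; nra.
Qed.

Lemma lim_inv_p : is_lim (fun r => / r) p_infty 0.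
Proof.
  apply (is_lim_inv (fun r => r) p_infty p_infty). apply is_lim_id. discriminate.
Qed.

Lemma lim_G_inv (G : R -> R) : continuity_pt G 0 -> is_lim (fun r => G (/ r)) p_infty (G 0).
Proof.
  intros Hc. apply (is_lim_comp G (fun r => / r) p_infty (G 0) 0).
  apply is_lim_continuity. exact Hc. apply lim_inv_p.
  exists 0. intros x Hx E. injection E. apply Rinv_neq_0_compat. lra.
Qed.

Lemma lim_Rpower_neg a : a < 0 -> is_lim (fun r => Rpower r a) p_infty 0.
Proof.
  intros Ha. unfold Rpower.
  apply (is_lim_comp exp (fun r => a * ln r) p_infty 0 m_infty).
  apply is_lim_exp_m.
  replace m_infty with (Rbar_mult a p_infty).
  apply is_lim_scal_l. apply is_lim_ln_p.
  simpl. destruct (Rle_dec 0 a) as [h|h]; [exfalso; lra | reflexivity].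
  exists 0. intros x _. discriminate.
Qed.

Lemma Rpower_pos x a : 0 < Rpower x a.
Proof. unfold Rpower. apply exp_pos. Qed.

Section P2.
Variables (Cc eps : R) (HC : 0 < Cc) (He : 0 < eps < 1).

Lemma cos_c_pos : 0 < cos (eps * (PI / 2)).
Proof. pose proof PI_RGT_0. apply cos_gt_0; nra. Qed.

Lemma lim_ReP_ratio : is_lim (fun r => ReP Cc eps r / (Cc * cos (eps * (PI / 2)) * Rpower r eps)) p_infty 1.
Proof.
  pose proof cos_c_pos.
  apply is_lim_ext_loc with (fun r => / cos (eps * (PI / 2)) * Gc eps (/ r)).
  { exists 0. intros r Hr. rewrite ReP_split by exact Hr. pose proof (Rpower_pos r eps). field. lra. }
  replace (Finite 1) with (Rbar_mult (/ cos (eps * (PI / 2))) (Gc eps 0)).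
  apply is_lim_scal_l. apply lim_G_inv. apply Gc_cont.
  simpl. rewrite Gc_0. f_equal. field. lra.
Qed.

Lemma lim_ImP_ratio : is_lim (fun r => ImP Cc eps r / r) p_infty 1.
Proof.
  apply is_lim_ext_loc with (fun r => 1 + (Cc * Gs eps (/ r)) * Rpower r (eps - 1)).
  { exists 0. intros r Hr. rewrite ImP_split by exact Hr.
    replace (Rpower r eps) with (Rpower r (eps - 1) * r).
    field. lra. replace eps with ((eps - 1) + 1) at 2 by ring. rewrite Rpower_plus, Rpower_1 by lra. reflexivity. }
  replace (Finite 1) with (Finite (1 + (Cc * Gs eps 0) * 0)) by (f_equal; ring).
  eapply is_lim_plus. apply is_lim_const.
  replace (Finite (Cc * Gs eps 0 * 0)) with (Rbar_mult (Cc * Gs eps 0) 0) by reflexivity.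
  apply is_lim_mult. replace (Finite (Cc * Gs eps 0)) with (Rbar_mult Cc (Gs eps 0)) by reflexivity.
  apply is_lim_scal_l. apply lim_G_inv. apply Gs_cont.
  apply lim_Rpower_neg. lra. simpl. trivial. reflexivity.
Qed.

Lemma part2a : equiv_pinfty (fun r => Re (phi Cc eps (Ci * RtoC r)))
               (fun r => Cc * cos (eps * (PI / 2)) * Rpower r eps).
Proof.
  pose proof cos_c_pos. split.
  { exists 0. intros x Hx. pose proof (Rpower_pos x eps). apply Rgt_not_eq. apply Rmult_gt_0_compat; nra. }
  eapply is_lim_ext. 2: apply lim_ReP_ratio. intros r. rewrite Re_phi_ir. reflexivity.
Qed.

Lemma part2b : equiv_pinfty (fun r => Im (phi Cc eps (Ci * RtoC r))) (fun r => r).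
Proof.
  split. { exists 0. intros x Hx. lra. }
  eapply is_lim_ext. 2: apply lim_ImP_ratio. intros r. rewrite Im_phi_ir. reflexivity.
Qed.

End P2.

Section P3.
Variables (Cc eps : R) (HC : 0 < Cc) (He : 0 < eps < 1).

Definition dReP r := Cc * eps * Rpower (mR r) eps / (1 + r * r) * (r * cos (eps * atan r) - sin (eps * atan r)).

Lemma ReP_deriv r : is_derive (ReP Cc eps) r (dReP r).
Proof.
  unfold ReP, dReP, mR, Rpower. auto_derive.
  repeat split; try nra. apply sqrt_lt_R0; nra.
  assert (Hs : sqrt (1 + r * r) * sqrt (1 + r * r) = 1 + r * r) by (apply sqrt_sqrt; nra).
  assert (Hs0 : 0 < sqrt (1 + r * r)) by (apply sqrt_lt_R0; nra).
  unfold Rsqr. replace (r * (r * 1)) with (r * r) by ring.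
  set (s := sqrt (1 + r * r)) in *. rewrite <- Hs. field. lra.
Qed.


Lemma dReP_pos r : 0 < r -> 0 < dReP r.
Proof.
  intros Hr. unfold dReP.
  pose proof (atan_bound r) as [Hb1 Hb2]. pose proof (atan_increasing 0 r Hr) as Ha. rewrite atan_0 in Ha.
  set (t := atan r) in *.
  assert (Hc : 0 < cos t) by (apply cos_gt_0; lra).
  assert (Er : r = sin t / cos t) by (unfold t; rewrite <- (tan_atan r) at 1; reflexivity).
  assert (E : r * cos (eps * t) - sin (eps * t) = sin (t - eps * t) / cos t).
  { rewrite sin_minus, Er. field. lra. }
  rewrite E. pose proof PI_RGT_0.
  assert (0 < sin (t - eps * t)) by (apply sin_gt_0; nra).
  pose proof (Rpower_pos (mR r) eps).
  apply Rmult_lt_0_compat. apply Rdiv_lt_0_compat. apply Rmult_lt_0_compat. nra. lra. nra.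
  apply Rdiv_lt_0_compat; lra.
Qed.

Lemma ReP_strict a b : 0 <= a -> a < b -> ReP Cc eps a < ReP Cc eps b.
Proof.
  intros Ha Hab.
  destruct (MVT_cor2 (ReP Cc eps) dReP a b Hab) as [c [Ec Hc]].
  { intros c _. apply is_derive_Reals. apply ReP_deriv. }
  assert (0 < dReP c) by (apply dReP_pos; lra). nra.
Qed.

Lemma ReP_mono a b : 0 <= a -> a <= b -> ReP Cc eps a <= ReP Cc eps b.
Proof. intros Ha Hab. destruct (Req_dec a b) as [->|N]. lra. left. apply ReP_strict; lra. Qed.

Lemma ReP_continuity : continuity (ReP Cc eps).
Proof.
  intros x. apply continuity_pt_filterlim. apply (ex_derive_continuous (ReP Cc eps)).
  exists (dReP x). apply ReP_deriv.
Qed.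

Lemma ImP_continuous x : continuous (ImP Cc eps) x.
Proof.
  apply (ex_derive_continuous (ImP Cc eps)). unfold ImP, mR, Rpower. auto_derive.
  repeat split; try nra. apply sqrt_lt_R0; nra.
Qed.

Lemma ReP_0 : ReP Cc eps 0 = Cc.
Proof. unfold ReP. rewrite mR_0, Rpower_1_base, atan_0, Rmult_0_r, cos_0. ring. Qed.

Lemma ReP_lim : is_lim (ReP Cc eps) p_infty p_infty.
Proof.
  pose proof (cos_c_pos eps He) as Hc.
  apply is_lim_ext_loc with (fun r => (ReP Cc eps r / (Cc * cos (eps * (PI / 2)) * Rpower r eps)) *
      (Cc * cos (eps * (PI / 2)) * Rpower r eps)).
  { exists 0. intros r Hr. pose proof (Rpower_pos r eps). field. split. lra. split; lra. }
  assert (Epos : forall a, 0 < a -> Rbar_mult a p_infty = p_infty).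
  { intros a Ha. simpl. destruct (Rle_dec 0 a) as [h|h]; [|exfalso; lra].
    destruct (Rle_lt_or_eq_dec 0 a h); [reflexivity|exfalso; lra]. }
  assert (L1 : is_lim (fun r => eps * ln r) p_infty p_infty).
  { pose proof (is_lim_scal_l (fun r => ln r) eps p_infty p_infty is_lim_ln_p) as H. rewrite Epos in H by lra. exact H. }
  assert (L2 : is_lim (fun r => Rpower r eps) p_infty p_infty).
  { unfold Rpower. apply (is_lim_comp exp (fun r => eps * ln r) p_infty p_infty p_infty).
    apply is_lim_exp_p. exact L1. exists 0. intros x _. discriminate. }
  assert (L3 : is_lim (fun r => Cc * cos (eps * (PI / 2)) * Rpower r eps) p_infty p_infty).
  { pose proof (is_lim_scal_l _ (Cc * cos (eps * (PI / 2))) p_infty p_infty L2) as H.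
    rewrite Epos in H by nra. eapply is_lim_ext. 2: exact H. intros; simpl; ring. }
  pose proof (is_lim_mult _ _ p_infty 1 p_infty (lim_ReP_ratio Cc eps HC He) L3) as H.
  rewrite Epos in H by lra. apply H. simpl. exact R1_neq_R0.
Qed.

Lemma ReP_unbounded X : exists R1, 0 < R1 /\ X < ReP Cc eps R1.
Proof.
  pose proof ReP_lim as H. apply is_lim_spec in H. destruct (H X) as [N HN].
  exists (Rmax N 0 + 1). split. pose proof (Rmax_r N 0). lra. apply HN. pose proof (Rmax_l N 0). lra.
Qed.

Definition gR (x : R) : R := epsilon (inhabits 0) (fun r => 0 <= r /\ ReP Cc eps r = x).

Lemma gR_spec x : Cc <= x -> 0 <= gR x /\ ReP Cc eps (gR x) = x.
Proof.
  intros Hx. unfold gR. apply epsilon_spec.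
  destruct (ReP_unbounded x) as [R1 [HR1 HX]].
  destruct (IVT_gen (ReP Cc eps) 0 R1 x ReP_continuity) as [r [Hr Er]].
  { rewrite ReP_0. rewrite Rmin_left, Rmax_right; lra. }
  exists r. rewrite Rmin_left in Hr by lra. split; [lra | exact Er].
Qed.

Lemma gR_ReP r : 0 <= r -> gR (ReP Cc eps r) = r.
Proof.
  intros Hr. assert (Cc <= ReP Cc eps r) by (pose proof (ReP_mono 0 r (Rle_refl 0) Hr) as H0; rewrite ReP_0 in H0; exact H0).
  destruct (gR_spec _ H) as [H1 H2].
  destruct (Rtotal_order (gR (ReP Cc eps r)) r) as [L|[E|L]].
  - apply ReP_strict in L; lra.
  - exact E.
  - apply ReP_strict in L; lra.
Qed.

End P3.

Section P3b.
Variables (Cc eps : R) (HC : 0 < Cc) (He : 0 < eps < 1).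

Lemma ball_R (a e b : R) : ball a e b <-> Rabs (b - a) < e.
Proof. reflexivity. Qed.

Lemma gR_cont x : Cc <= x ->
  filterlim (gR Cc eps) (within (fun y => Cc <= y) (locally x)) (locally (gR Cc eps x)).
Proof.
  intros Hx. apply filterlim_locally. intros e. unfold within.
  destruct (gR_spec Cc eps HC He x Hx) as [Hr0 Er0].
  set (r0 := gR Cc eps x) in *.
  pose proof (cond_pos e) as He0.
  set (b := ReP Cc eps (r0 + e / 2)).
  assert (Hb : x < b) by (unfold b; rewrite <- Er0; apply (ReP_strict Cc eps HC He); lra).
  set (lo := if Rle_dec 0 (r0 - e / 2) then ReP Cc eps (r0 - e / 2) else x - 1).
  assert (Hlo : lo < x).
  { unfold lo. destruct (Rle_dec 0 (r0 - e / 2)). rewrite <- Er0. apply (ReP_strict Cc eps HC He); lra. lra. }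
  assert (Hmp : 0 < Rmin (b - x) (x - lo)) by (apply Rmin_pos; lra).
  exists (mkposreal _ Hmp).
  intros y Hy Hcy. rewrite ball_R in Hy |- *. simpl in Hy.
  pose proof (Rmin_l (b - x) (x - lo)). pose proof (Rmin_r (b - x) (x - lo)).
  apply Rabs_def2 in Hy. destruct Hy as [Hy1 Hy2].
  destruct (gR_spec Cc eps HC He y Hcy) as [Hg0 Eg].
  set (gy := gR Cc eps y) in *.
  assert (U : gy < r0 + e / 2).
  { destruct (Rlt_le_dec gy (r0 + e / 2)) as [h|h]. exact h. exfalso.
    pose proof (ReP_mono Cc eps HC He (r0 + e / 2) gy ltac:(lra) h). fold b in H1. lra. }
  assert (D : r0 - e / 2 < gy).
  { unfold lo in *. destruct (Rle_dec 0 (r0 - e / 2)) as [h|h].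
    - destruct (Rlt_le_dec (r0 - e / 2) gy) as [h'|h']. exact h'. exfalso.
      pose proof (ReP_mono Cc eps HC He gy (r0 - e / 2) Hg0 h'). lra.
    - lra. }
  apply Rabs_def1; lra.
Qed.

Definition fC (x : R) := ImP Cc eps (gR Cc eps x).

Lemma fC_cont x : Cc <= x ->
  filterlim fC (within (fun y => Cc <= y) (locally x)) (locally (fC x)).
Proof.
  intros Hx. unfold fC. eapply filterlim_comp. apply gR_cont. exact Hx. apply ImP_continuous.
Qed.

Lemma ImP_nonneg r : 0 <= r -> 0 <= ImP Cc eps r.
Proof.
  intros Hr. unfold ImP. pose proof (atan_bound r). pose proof PI_RGT_0.
  assert (0 <= atan r). { destruct (Req_dec r 0) as [->|N]. rewrite atan_0; lra.
    left. rewrite <- atan_0. apply atan_increasing. lra. }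
  assert (0 <= sin (eps * atan r)) by (apply sin_ge_0; nra).
  pose proof (Rpower_pos (mR r) eps).
  assert (0 <= Cc * Rpower (mR r) eps * sin (eps * atan r)) by (apply Rmult_le_pos; nra).
  lra.
Qed.

End P3b.

Section P3c.
Variables (Cc eps : R) (HC : 0 < Cc) (He : 0 < eps < 1).

Let c0 := Cc * cos (eps * (PI / 2)).
Lemma c0_pos : 0 < c0.
Proof. unfold c0. pose proof (cos_c_pos eps He). nra. Qed.

Definition rho r := ReP Cc eps r / (c0 * Rpower r eps).
Definition Hf r := (ImP Cc eps r / r) / Rpower (rho r) (1 / eps).

Lemma Rpower_cont1 : continuous (fun y => Rpower y (1 / eps)) 1.
Proof.
  apply (ex_derive_continuous (fun y => Rpower y (1 / eps))). unfold Rpower. auto_derive. lra.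
Qed.

Lemma Hf_lim : is_lim Hf p_infty 1.
Proof.
  assert (L1 : is_lim (fun r => Rpower (rho r) (1 / eps)) p_infty (Rpower 1 (1 / eps))).
  { apply (is_lim_comp_continuous rho (fun y => Rpower y (1 / eps))).
    unfold rho, c0. apply lim_ReP_ratio; assumption. apply Rpower_cont1. }
  rewrite Rpower_1_base in L1.
  assert (L2 : is_lim (fun r => ImP Cc eps r / r) p_infty 1) by (apply lim_ImP_ratio; assumption).
  pose proof (is_lim_div _ _ p_infty 1 1 L2 L1) as H.
  simpl in H. replace (1 * / 1) with 1 in H by field. apply H.
  intros E; injection E; lra. exact I.
Qed.

Lemma gR_lim : is_lim (gR Cc eps) p_infty p_infty.
Proof.
  apply is_lim_spec. intros M. exists (ReP Cc eps (Rmax M 0)). intros x Hx.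
  assert (HC0 : Cc <= ReP Cc eps (Rmax M 0)).
  { pose proof (ReP_mono Cc eps HC He 0 (Rmax M 0) (Rle_refl 0) (Rmax_r M 0)). rewrite ReP_0 in H; assumption. }
  destruct (gR_spec Cc eps HC He x ltac:(lra)) as [H1 H2].
  destruct (Rlt_le_dec (Rmax M 0) (gR Cc eps x)) as [h|h].
  pose proof (Rmax_l M 0). lra.
  exfalso. pose proof (ReP_mono Cc eps HC He _ _ H1 h). lra.
Qed.

Lemma fC_ratio x : Cc < x ->
  fC Cc eps x / (Rpower c0 (- (1 / eps)) * Rpower x (1 / eps)) = Hf (gR Cc eps x).
Proof.
  intros Hx. destruct (gR_spec Cc eps HC He x ltac:(lra)) as [H1 H2].
  set (r := gR Cc eps x) in *.
  assert (Hr : 0 < r).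
  { destruct H1 as [h|h]. exact h. exfalso. rewrite <- h in H2. rewrite ReP_0 in H2. lra. }
  pose proof c0_pos as Hc0.
  pose proof (Rpower_pos r eps) as HP.
  assert (Hx0 : 0 < x) by lra.
  assert (Hrho : 0 < rho r) by (unfold rho; rewrite H2; apply Rdiv_lt_0_compat; nra).
  assert (Ex : x = rho r * c0 * Rpower r eps) by (unfold rho; rewrite H2; field; lra).
  assert (E : Rpower c0 (- (1 / eps)) * Rpower x (1 / eps) = Rpower (rho r) (1 / eps) * r).
  { rewrite Ex. rewrite <- !Rpower_mult_distr by nra.
    rewrite Rpower_mult. replace (eps * (1 / eps)) with 1 by (field; lra). rewrite Rpower_1 by lra.
    rewrite Rpower_Ropp. pose proof (Rpower_pos c0 (1 / eps)). field. lra.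
    }
  rewrite E. unfold fC, Hf. fold r. pose proof (Rpower_pos (rho r) (1 / eps)). field. lra.
Qed.

Lemma part3_equiv : equiv_pinfty (fC Cc eps)
   (fun r => Rpower (Cc * cos (eps * (PI / 2))) (- (1 / eps)) * Rpower r (1 / eps)).
Proof.
  split.
  { exists 0. intros x _. pose proof (Rpower_pos (Cc * cos (eps * (PI / 2))) (- (1 / eps))).
    pose proof (Rpower_pos x (1 / eps)). apply Rgt_not_eq. apply Rmult_gt_0_compat; lra. }
  apply is_lim_ext_loc with (fun x => Hf (gR Cc eps x)).
  { exists Cc. intros x Hx. symmetry. apply fC_ratio. exact Hx. }
  apply (is_lim_comp Hf (gR Cc eps) p_infty 1 p_infty). apply Hf_lim. apply gR_lim.
  exists 0. intros x _. discriminate.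
Qed.

End P3c.

Theorem lemma3p1 (Cc eps : R) (hC : 0 < Cc) (heps0 : 0 < eps) (heps1 : eps < 1) :
  (* (1) *)
  biholomorphic_onto_image (phi Cc eps) H0 /\
  (* (2) *)
  equiv_pinfty (fun r => Re (phi Cc eps (Ci * RtoC r)))
               (fun r => Cc * cos (eps * (PI / 2)) * Rpower r eps) /\
  equiv_pinfty (fun r => Im (phi Cc eps (Ci * RtoC r))) (fun r => r) /\
  (* (3) *)
  exists f : R -> R,
    (forall x, Cc <= x ->
       filterlim f (within (fun y => Cc <= y) (locally x)) (locally (f x))) /\
    (forall x, Cc <= x -> 0 <= f x) /\
    (forall r, 0 < r ->
       Cc <= Re (phi Cc eps (Ci * RtoC r)) /\
       Im (phi Cc eps (Ci * RtoC r)) = f (Re (phi Cc eps (Ci * RtoC r)))) /\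
    equiv_pinfty f
      (fun r => Rpower (Cc * cos (eps * (PI / 2))) (- (1 / eps)) * Rpower r (1 / eps)).
Proof.
  assert (He : 0 < eps < 1) by (split; assumption).
  split. { apply part1; assumption. }
  split. { apply part2a; assumption. }
  split. { apply part2b; assumption. }
  exists (fC Cc eps). split.
  { intros x Hx. apply fC_cont; assumption. }
  split.
  { intros x Hx. unfold fC. destruct (gR_spec Cc eps hC He x Hx) as [H1 _]. apply ImP_nonneg; assumption. }
  split.
  { intros r Hr. rewrite Re_phi_ir, Im_phi_ir. split.
    - pose proof (ReP_mono Cc eps hC He 0 r (Rle_refl 0) ltac:(lra)) as H. rewrite ReP_0 in H; assumption.
    - unfold fC. rewrite gR_ReP; [reflexivity | assumption | assumption | lra]. }
  apply part3_equiv; assumption.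
Qed.
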